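(* Let $X$ and $Y$ be uncertain variables on a common set $\Omega$ with finite ranges. Then $$\mathcal{L}_\star(X\rightarrow Y)=\log_2\Big(|[\![X]\!]| - \min_{y\in[\![Y]\!]} |[\![X\mid Y(\omega)=y]\!]| + 1\Big).$$
   Context: Let $\Omega$ be a set. An uncertain variable (uv) is a map $X:\Omega\to\mathbb{X}$ into some set; all uvs considered have finite ranges. The range of $X$ is $[\![X]\!]:=\{X(\omega):\omega\in\Omega\}$; the conditional range is $[\![X\mid Y(\omega)=y]\!]:=\{X(\omega):\omega\in\Omega,\ Y(\omega)=y\}$. The non-stochastic brute-force guessing leakage from a uv $U$ to a uv $Y$ is $$\mathcal{L}(U\rightarrow Y):=\log_2\left(\frac{|[\![U]\!]|}{\min_{y\in[\![Y]\!]}|[\![U\mid Y(\omega)=y]\!]|}\right).$$ The maximal non-stochastic brute-force leakage from $X$ to $Y$ is $$\mathcal{L}_\star(X\rightarrow Y):=\sup_{g}\ \mathcal{L}(g\circ X\rightarrow Y),$$ where the supremum ranges over all finite sets $\mathcal{U}$ and all functions $g:[\![X]\!]\to\mathcal{U}$. *)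

(* Defs.v *)
From HB Require Import structures.
From mathcomp Require Import all_boot all_order all_algebra.
From mathcomp Require Import all_classical all_reals all_analysis.
From mathcomp Require Import finmap.
Set Implicit Arguments. Unset Strict Implicit. Unset Printing Implicit Defensive.
Import Order.TTheory GRing.Theory Num.Theory.
Local Open Scope classical_set_scope.
Local Open Scope ring_scope.

Definition log2 (R : realType) (x : R) : R := ln x / ln 2.

Definition ncard (T : choiceType) (A : set T) : nat := #|` fset_set A |%fset.

Definition urange (Omega : Type) (T : choiceType) (X : Omega -> T) : set T :=
  range X.

Definition ucrange (Omega : Type) (T S : choiceType)
  (X : Omega -> T) (Y : Omega -> S) (y : S) : set T :=
  [set X w | w in [set w | Y w = y]].

Definition min_crange (R : realType) (Omega : Type) (T S : choiceType)
  (X : Omega -> T) (Y : Omega -> S) : R :=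
  inf [set (ncard (ucrange X Y y))%:R | y in urange Y].

Definition bf_leakage (R : realType) (Omega : Type) (T S : choiceType)
  (U : Omega -> T) (Y : Omega -> S) : R :=
  log2 ((ncard (urange U))%:R / min_crange R U Y).

(* A function on
   [[X]] is represented by (any extension to) a function on the codomain of X;
   only its values on [[X]] matter. *)
Definition max_bf_leakage (R : realType) (Omega : Type) (T S : choiceType)
  (X : Omega -> T) (Y : Omega -> S) : R :=
  sup [set r : R | exists (U : finType) (g : T -> U),
                     r = bf_leakage R (g \o X) Y].

(* Main.v *)
Require Import Defs.
From HB Require Import structures.
From mathcomp Require Import all_boot all_order all_algebra.
From mathcomp Require Import all_classical all_reals all_analysis.
From mathcomp Require Import finmap.
From mathcomp Require Import lra.
Set Implicit Arguments. Unset Strict Implicit. Unset Printing Implicit Defensive.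
Import Order.TTheory GRing.Theory Num.Theory.
Local Open Scope classical_set_scope.
Local Open Scope ring_scope.

Lemma card_imfs_le (T U : choiceType) (f : T -> U) (A : {fset T}) :
  (#|` (f @` A)%fset| <= #|` A|)%fset%N.
Proof. exact: leq_imfset_card. Qed.

Lemma card_imfs_split (T U : choiceType) (f : T -> U) (A B : {fset T}) :
  (A `<=` B)%fset ->
  (#|` (f @` B)%fset| <= #|` (f @` A)%fset| + (#|` B| - #|` A|))%N.
Proof.
move=> AB.
have eB : B = (A `|` (B `\` A))%fset.
  by rewrite -{1}(fsetID A B) (fsetIidPr AB).
have -> : (f @` B)%fset = (f @` A `|` f @` (B `\` A))%fset by rewrite -imfsetU -eB.
rewrite cardfsU.
apply: (leq_trans (leq_subr _ _)).
rewrite leq_add2l -cardfsDS //.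
exact: card_imfs_le.
Qed.

Lemma inf_nat_min (R : realType) (S : Type) (E : set S) (F : S -> nat) :
  E !=set0 ->
  exists2 y0, E y0 & (inf [set (F y)%:R | y in E] = (F y0)%:R :> R) /\
    (forall y, E y -> (F y0 <= F y)%N).
Proof.
move=> [z Ez].
pose P := fun n : nat => `[< exists y, E y /\ F y = n >].
have exP : exists n, P n by exists (F z); apply/asboolP; exists z.
case: (ex_minnP exP) => n /asboolP [y0 [Ey0 Fy0]] minn.
have miny : forall y, E y -> (F y0 <= F y)%N.
  by move=> y Ey; rewrite Fy0; apply: minn; apply/asboolP; exists y.
exists y0 => //; split => //.
rewrite /max_bf_leakage; apply/eqP; rewrite eq_le; apply/andP; split.
- apply: ge_inf; last by exists y0.
  exists 0 => _ [y _ <-]; exact: ler0n.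
- apply: lb_le_inf; first by exists (F y0)%:R, y0.
  by move=> _ [y Ey <-]; rewrite ler_nat miny.
Qed.

Lemma log2_le (R : realType) (a b : R) : 0 < a -> a <= b -> log2 a <= log2 b.
Proof.
move=> a0 ab; have b0 : 0 < b by apply: lt_le_trans ab.
rewrite /log2 ler_pM2r; last by rewrite invr_gt0 ln_gt0 // ltr1n.
by rewrite ler_ln // posrE.
Qed.

Lemma ncard_le (T : choiceType) (A B : set T) : finite_set B -> A `<=` B ->
  (ncard A <= ncard B)%N.
Proof.
move=> fB AB; have fA : finite_set A := sub_finite_set AB fB.
rewrite /ncard; apply: fsubset_leq_card; by rewrite -fset_set_sub.
Qed.

Lemma ncard_gt0 (T : choiceType) (A : set T) : finite_set A -> A !=set0 ->
  (0 < ncard A)%N.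
Proof.
move=> fA [x Ax]; rewrite /ncard cardfs_gt0; apply/negP => /eqP.
move/(fset_set_set0 fA) => A0; by rewrite A0 in Ax.
Qed.

Lemma ucrange_comp (Omega : Type) (T S U : choiceType) (g : T -> U)
  (X : Omega -> T) (Y : Omega -> S) y :
  ucrange (g \o X) Y y = g @` ucrange X Y y.
Proof. by rewrite /ucrange image_comp. Qed.

Lemma urange_comp (Omega : Type) (T U : choiceType) (g : T -> U)
  (X : Omega -> T) : urange (g \o X) = g @` urange X.
Proof. by rewrite /urange image_comp. Qed.

Theorem proposition4 (R : realType) (Omega : Type) (w0 : Omega)
  (T S : choiceType) (X : Omega -> T) (Y : Omega -> S)
  (finX : finite_set (urange X)) (finY : finite_set (urange Y)) :
  max_bf_leakage R X Y =
    log2 ((ncard (urange X))%:R - min_crange R X Y + 1).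
Proof.
set n := ncard (urange X).
have subA : forall y, ucrange X Y y `<=` urange X.
  by move=> y _ [w _ <-]; exists w.
have finA : forall y, finite_set (ucrange X Y y).
  by move=> y; apply: sub_finite_set (subA y) finX.
have neA : forall y, urange Y y -> ucrange X Y y !=set0.
  by move=> _ [w _ <-]; exists (X w); exists w.
have neY : urange Y !=set0 by exists (Y w0), w0.
have An : forall y, (ncard (ucrange X Y y) <= n)%N.
  by move=> y; apply: ncard_le.
case: (inf_nat_min R (fun y => ncard (ucrange X Y y)) neY) => y0 Yy0 [m_eq minA].
set m := ncard (ucrange X Y y0).
have -> : min_crange R X Y = m%:R by [].
have mn : (m <= n)%N := An y0.
have mpos : (0 < m)%N by apply: ncard_gt0; [exact: finA | exact: neA].
have ub : forall (U : finType) (g : T -> U),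
    bf_leakage R (g \o X) Y <= log2 (n%:R - m%:R + 1).
  move=> U g.
  rewrite /bf_leakage.
  case: (inf_nat_min R (fun y => ncard (ucrange (g \o X) Y y)) neY)
    => y1 Yy1 [c_eq _].
  rewrite /min_crange c_eq.
  set k := ncard (urange (g \o X)).
  set c := ncard (ucrange (g \o X) Y y1).
  have cpos : (0 < c)%N.
    apply: ncard_gt0; rewrite ucrange_comp.
      by apply: finite_image; exact: finA.
    by have [x Ax] := neA y1 Yy1; exists (g x), x.
  have kpos : (0 < k)%N.
    apply: ncard_gt0; rewrite urange_comp.
      by apply: finite_image.
    by exists (g (X w0)); exists (X w0) => //; exists w0.
  have kc : (k <= c + (n - m))%N.
    have sub' : (fset_set (ucrange X Y y1) `<=` fset_set (urange X))%fset.
      by rewrite -fset_set_sub //; exact: subA.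
    move: (card_imfs_split g sub').
    rewrite -!fset_set_image // -urange_comp -ucrange_comp -/k -/c -/n.
    move=> h2; apply: (leq_trans h2); rewrite leq_add2l.
    apply: leq_sub2l; exact: minA.
  apply: log2_le.
    by apply: divr_gt0; rewrite ltr0n.
  rewrite ler_pdivrMr ?ltr0n //.
  have kcR : (k%:R <= c%:R + (n%:R - m%:R) :> R).
    by rewrite -natrB // -natrD ler_nat.
  have c1 : (1 <= c%:R :> R) by rewrite ler1n.
  have d0 : (0 <= n%:R - m%:R :> R) by rewrite subr_ge0 ler_nat.
  case: (leP (k%:R : R) (n%:R - m%:R + 1)) => hk.
    nra.
  nra.
pose FX := fset_set (urange X).
pose FA := fset_set (ucrange X Y y0).
pose FB := (FX `\` FA)%fset.
have FAX : (FA `<=` FX)%fset by rewrite -fset_set_sub //; exact: subA.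
pose g : T -> option FB := fun x => insub x.
have gA : forall x, x \in FA -> g x = None.
  move=> x xA; rewrite /g insubF //; apply/negbTE.
  by rewrite in_fsetD xA.
have gB : forall x (xB : x \in FB), g x = Some (Sub x xB).
  by move=> x xB; rewrite /g insubT.
have [a Aa] := neA y0 Yy0.
have aA : a \in FA by rewrite /FA in_fset_set; [exact: mem_set | exact: finA].
have gFA : (g @` FA)%fset = [fset None]%fset.
  apply/fsetP => z; rewrite inE; apply/imfsetP/eqP.
    by move=> [x xA ->]; rewrite gA.
  by move=> ->; exists a => //; rewrite gA.
have eX : FX = (FA `|` FB)%fset by rewrite -{1}(fsetID FA FX) (fsetIidPr FAX).
have kval : ncard (urange (g \o X)) = (n - m).+1.
  rewrite /ncard urange_comp fset_set_image // -/FX.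
  have -> : (g @` FX)%fset = (None |` g @` FB)%fset by rewrite -gFA -imfsetU -eX.
  rewrite cardfsU1.
  have -> : (None \notin (g @` FB)%fset) = true.
    apply/negP => /imfsetP [x xB]; by rewrite (gB x xB).
  have -> : #|` (g @` FB)%fset| = #|` FB|.
    apply/eqP/card_in_imfsetP => x y xB yB.
    by rewrite (gB x xB) (gB y yB) => -[].
  by rewrite /FB cardfsDS.
have cval : min_crange R (g \o X) Y = 1.
  case: (inf_nat_min R (fun y => ncard (ucrange (g \o X) Y y)) neY)
    => y1 Yy1 [c_eq cmin].
  rewrite /min_crange c_eq; apply/eqP; rewrite pnatr_eq1 eqn_leq; apply/andP; split.
    apply: (leq_trans (cmin y0 Yy0)).
    have -> : ucrange (g \o X) Y y0 = [set None].
      apply/seteqP; split.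
        by move=> _ [w yw <-]; rewrite /= gA // /FA in_fset_set; [apply: mem_set; exists w | exact: finA].
      move=> _ ->; move: aA; case: Aa => w yw <- wA.
      by exists w => //=; rewrite gA.
    by rewrite /ncard fset_set1 cardfs1.
  apply: ncard_gt0; rewrite ucrange_comp.
    by apply: finite_image; exact: finA.
  by have [x Ax] := neA y1 Yy1; exists (g x), x.
have attained : bf_leakage R (g \o X) Y = log2 (n%:R - m%:R + 1).
  by rewrite /bf_leakage cval divr1 kval -addn1 natrD natrB.
rewrite /max_bf_leakage; apply/eqP; rewrite eq_le; apply/andP; split.
  apply: ge_sup => //=; first by exists (bf_leakage R (g \o X) Y); exists (option FB), g.
  by move=> _ [U [f ->]]; exact: ub.
rewrite -attained; apply: sup_upper_bound.
  split; first by exists (bf_leakage R (g \o X) Y); exists (option FB), g.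
  by exists (log2 (n%:R - m%:R + 1)) => _ [U [f ->]]; exact: ub.
by exists (option FB), g.
Qed.
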